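(* Let $\mathcal{W}$ be a non-empty, compact and convex subset of $\mathbb{R}^m$, and consider the geometric mixture $\textsc{geo}$ with parameter space $\mathcal{W}$. Then for every probability matrix $\mathbf{P}$ over $\mathcal{P}_+$ and every $x\in\mathcal{X}$, the function $\mathbf{w}\mapsto\ell(x,\textsc{geo}(\mathbf{w},\mathbf{P}))$ is convex and differentiable on $\mathcal{W}$, and for all $\mathbf{w}\in\mathcal{W}$ $$\lvert\nabla_{\mathbf{w}}\ell(x,\textsc{geo}(\mathbf{w},\mathbf{P}))\rvert^2\le a\,\ell(x,\textsc{geo}(\mathbf{w},\mathbf{P}))$$ for every $a\ge\frac{m}{\log_2 e}\log_2^2\!\big(p_{\max}(\mathbf{P})/p_{\min}(\mathbf{P})\big)$. In particular $\textsc{geo}$ satisfies the properties of a nice mixture, with the constant in the gradient condition given by this bound.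
   Context: $\mathcal{X}=\{1,\dots,N\}$, $1<N<\infty$; $\mathcal{P}_+$ is the set of distributions on $\mathcal{X}$ with positive probability on each letter; $m>1$. A probability matrix over $\mathcal{P}_+$ is $\mathbf{P}=(\mathbf{p}(1)\cdots\mathbf{p}(N))$ with $\mathbf{p}(x)=(p_1(x),\dots,p_m(x))^{\mathsf T}$, $p_i\in\mathcal{P}_+$. $p_{\max}(\mathbf{P}):=\max_{x\in\mathcal{X}}\max_{1\le i\le m}p_i(x)$, $p_{\min}(\mathbf{P}):=\min_{x\in\mathcal{X}}\min_{1\le i\le m}p_i(x)$. $\ell(x,p):=-\log_2p(x)$. The geometric mixture is $\textsc{geo}(x;\mathbf{w},\mathbf{P}):=\prod_{i=1}^mp_i(x)^{w_i}\big/\sum_{y\in\mathcal{X}}\prod_{i=1}^mp_i(y)^{w_i}$ for $\mathbf{w}\in\mathbb{R}^m$. A mixture with parameter space $\mathcal{W}$ is nice if $\mathcal{W}$ is non-empty, compact, convex, $\mathbf{w}\mapsto\ell(x,\textsc{mix}(\mathbf{w},\mathbf{P}))$ is convex and differentiable on $\mathcal{W}$ for all $\mathbf{P},x$, and there is $a>0$ with $\lvert\nabla_{\mathbf{w}}\ell(x,\textsc{mix}(\mathbf{w},\mathbf{P}))\rvert^2\le a\,\ell(x,\textsc{mix}(\mathbf{w},\mathbf{P}))$ for all $\mathbf{w},\mathbf{P},x$. *)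

(* Defs.v *)
From HB Require Import structures.
From mathcomp Require Import all_boot all_order all_algebra.
From mathcomp Require Import all_classical all_reals all_analysis.
Set Implicit Arguments. Unset Strict Implicit. Unset Printing Implicit Defensive.
Import Order.TTheory GRing.Theory Num.Theory.
Import numFieldNormedType.Exports.
Local Open Scope classical_set_scope.
Local Open Scope ring_scope.

(* Alphabet X = {1,...,N} is modelled by 'I_N; experts are indexed by 'I_m.
   A probability matrix P : 'M[R]_(m, N) has P i x = p_i(x). *)

Definition log2 {R : realType} (x : R) : R := ln x / ln 2.

Definition prob_matrix_pos {R : realType} (m N : nat) (P : 'M[R]_(m, N)) : Prop :=
  (forall i x, 0 < P i x) /\ (forall i, \sum_(x < N) P i x = 1).

Definition pmax {R : realType} (m N : nat) (P : 'M[R]_(m, N)) : R :=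
  \big[Num.max/0]_(i < m) \big[Num.max/0]_(x < N) P i x.

Definition pmin {R : realType} (m N : nat) (P : 'M[R]_(m, N)) : R :=
  \big[Num.min/1]_(i < m) \big[Num.min/1]_(x < N) P i x.

Definition geo_num {R : realType} (m N : nat) (w : 'rV[R]_m) (P : 'M[R]_(m, N))
  (y : 'I_N) : R := \prod_(i < m) (P i y) `^ (w ord0 i).

Definition geo {R : realType} (m N : nat) (x : 'I_N) (w : 'rV[R]_m)
  (P : 'M[R]_(m, N)) : R :=
  geo_num w P x / \sum_(y < N) geo_num w P y.

Definition loss {R : realType} (p : R) : R := - log2 p.

Definition convex_fun_on {R : realType} (m : nat) (W : set 'rV[R]_m)
  (f : 'rV[R]_m -> R) : Prop :=
  forall u v, W u -> W v -> forall t : R, 0 <= t <= 1 ->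
    f (t *: u + (1 - t) *: v) <= t * f u + (1 - t) * f v.

Definition grad_norm2 {R : realType} (m : nat) (f : 'rV[R]_m -> R)
  (w : 'rV[R]_m) : R :=
  \sum_(i < m) ('D_(delta_mx ord0 i) f w) ^+ 2.

(* Main.v *)
Require Import Defs.
From HB Require Import structures.
From mathcomp Require Import all_boot all_order all_algebra.
From mathcomp Require Import all_classical all_reals all_analysis.
From mathcomp Require Import ring lra.
Import Order.TTheory GRing.Theory Num.Theory.
Import numFieldNormedType.Exports.
Local Open Scope classical_set_scope.
Local Open Scope ring_scope.

Set Implicit Arguments. Unset Strict Implicit.

Section S.
Variables (R : realType) (N m : nat) (P : 'M[R]_(m, N)).
Hypothesis Ppos : forall i x, 0 < P i x.

Definition cc (y : 'I_N) (w : 'rV[R]_m) : R := \sum_(j < m) w ord0 j * ln (P j y).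
Definition SS (w : 'rV[R]_m) : R := \sum_(y < N) expR (cc y w).

Lemma geo_numE w y : geo_num w P y = expR (cc y w).
Proof.
rewrite /geo_num /cc expR_sum; apply: eq_bigr => j _.
by rewrite /powR (gt_eqF (Ppos _ _)).
Qed.

Lemma SS_gt0 w : (0 < N)%N -> 0 < SS w.
Proof.
move=> N0; rewrite /SS (bigD1 (Ordinal N0)) //=.
by apply: ltr_pwDl; [exact: expR_gt0 | apply: sumr_ge0 => *; exact: expR_ge0].
Qed.

Lemma ln2_gt0 : 0 < ln (2:R).
Proof. by apply: ln_gt0; rewrite ltr1n. Qed.

Lemma lossE x w : (0 < N)%N -> loss (geo x w P) = (ln (SS w) - cc x w) / ln 2.
Proof.
move=> N0; rewrite /loss /log2 /geo.
rewrite (eq_bigr (fun y => expR (cc y w))); last by move=> y _; rewrite geo_numE.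
rewrite geo_numE -/(SS w) ln_div ?expRK; last 2 first.
- by rewrite posrE expR_gt0.
- by rewrite posrE SS_gt0.
by rewrite -mulNr opprB.
Qed.
End S.

Set Implicit Arguments. Unset Strict Implicit.

Section S2.
Variable (R : realType).

Lemma expR_conv (p q t : R) : 0 <= t <= 1 ->
  expR (t * p + (1 - t) * q) <= t * expR p + (1 - t) * expR q.
Proof.
move=> /andP[t0 t1].
set z := t * p + (1 - t) * q.
have h (a : R) : expR z * (1 + (a - z)) <= expR a.
  have -> : expR a = expR z * expR (a - z) by rewrite -expRD; congr expR; ring.
  by rewrite ler_wpM2l ?expR_ge0 ?expR_ge1Dx.
have h1 := h p; have h2 := h q.
have e : t * (expR z * (1 + (p - z))) + (1 - t) * (expR z * (1 + (q - z))) = expR z.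
  rewrite /z; ring.
have h1' : t * (expR z * (1 + (p - z))) <= t * expR p by rewrite ler_wpM2l.
have h2' : (1 - t) * (expR z * (1 + (q - z))) <= (1 - t) * expR q.
  by rewrite ler_wpM2l // subr_ge0.
lra.
Qed.

Lemma lse_conv (N : nat) (a b : 'I_N -> R) (t : R) : (0 < N)%N -> 0 <= t <= 1 ->
  ln (\sum_(y < N) expR (t * a y + (1 - t) * b y)) <=
  t * ln (\sum_(y < N) expR (a y)) + (1 - t) * ln (\sum_(y < N) expR (b y)).
Proof.
move=> N0 t01.
have pos (c : 'I_N -> R) : 0 < \sum_(y < N) expR (c y).
  rewrite (bigD1 (Ordinal N0)) //=.
  by apply: ltr_pwDl; [exact: expR_gt0 | apply: sumr_ge0 => *; exact: expR_ge0].
set A := \sum_(y < N) expR (a y); set B := \sum_(y < N) expR (b y).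
have A0 : 0 < A := pos a. have B0 : 0 < B := pos b.
set al := ln A; set be := ln B.
have key : \sum_(y < N) expR (t * a y + (1 - t) * b y) <= expR (t * al + (1 - t) * be).
  have : \sum_(y < N) expR (t * (a y - al) + (1 - t) * (b y - be)) <= 1.
    apply: (@le_trans _ _ (\sum_(y < N) (t * expR (a y - al) + (1 - t) * expR (b y - be)))).
      by apply: ler_sum => y _; exact: expR_conv.
    rewrite big_split /= -!mulr_sumr.
    under eq_bigr do rewrite expRB.
    under [X in _ + _ * X]eq_bigr do rewrite expRB.
    rewrite -!mulr_suml /al /be !lnK ?posrE // !mulfV ?gt_eqF //.
    lra.
  have -> : \sum_(y < N) expR (t * (a y - al) + (1 - t) * (b y - be)) =
     (\sum_(y < N) expR (t * a y + (1 - t) * b y)) / expR (t * al + (1 - t) * be).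
    rewrite mulr_suml; apply: eq_bigr => y _; rewrite -expRB; congr expR; ring.
  by rewrite ler_pdivrMr ?expR_gt0 // mul1r.
by rewrite -ler_expR lnK ?posrE //.
Qed.
End S2.

Set Implicit Arguments. Unset Strict Implicit.

Section S3.
Variables (R : realType) (N m : nat) (P : 'M[R]_(m, N)).

Lemma cc_lin y (u v : 'rV[R]_m) t :
  cc P y (t *: u + (1 - t) *: v) = t * cc P y u + (1 - t) * cc P y v.
Proof.
rewrite /cc !mulr_sumr -big_split; apply: eq_bigr => j _; rewrite !mxE /=; ring.
Qed.

Definition FF x (w : 'rV[R]_m) := (ln (SS P w) - cc P x w) / ln 2.

Lemma FF_conv x (u v : 'rV[R]_m) t : (0 < N)%N -> 0 <= t <= 1 ->
  FF x (t *: u + (1 - t) *: v) <= t * FF x u + (1 - t) * FF x v.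
Proof.
move=> N0 t01; rewrite /FF /SS cc_lin.
under eq_bigr do rewrite cc_lin.
have h := lse_conv (fun y => cc P y u) (fun y => cc P y v) N0 t01.
have k0 : 0 < (ln (2:R))^-1 by rewrite invr_gt0 ln2_gt0.
set X := ln _ in h *; set A := ln _ in h *; set B := ln _ in h *.
have h' := ler_wpM2r (ltW k0) h.
rewrite !mulrDl in h'. lra.
Qed.
End S3.

Set Implicit Arguments. Unset Strict Implicit.

Section S4.
Variables (R : realType) (N m : nat) (P : 'M[R]_(m, N)).
Hypothesis Ppos : forall i x, 0 < P i x.
Hypothesis N0 : (0 < N)%N.

Lemma cc_diff y (w : 'rV[R]_m) : differentiable (cc P y) w.
Proof.
have -> : cc P y = \sum_(j < m) ((fun w : 'rV[R]_m => w ord0 j) * cst (ln (P j y))).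
  by rewrite fct_sumE; apply/funext => u; rewrite /cc; apply: eq_bigr.
apply: differentiable_sum => j; apply: differentiableM.
  exact: differentiable_coord.
exact: differentiable_cst.
Qed.

Lemma SS_diff (w : 'rV[R]_m) : differentiable (SS P) w.
Proof.
have -> : SS P = \sum_(y < N) (expR \o cc P y).
  by rewrite fct_sumE; apply/funext => u; rewrite /SS; apply: eq_bigr.
apply: differentiable_sum => y; apply: differentiable_comp; first exact: cc_diff.
by apply/derivable1_diffP; exact: ex_derive.
Qed.

Lemma FF_diff x (w : 'rV[R]_m) : differentiable (FF P x) w.
Proof.
have -> : FF P x = ((@ln R \o SS P) - cc P x) * cst (ln 2)^-1 by [].
apply: differentiableM; last exact: differentiable_cst.
apply: differentiableB; last exact: cc_diff.
apply: differentiable_comp; first exact: SS_diff.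
apply/derivable1_diffP; apply: ex_derive; apply: is_derive1_ln.
exact: SS_gt0.
Qed.
End S4.

Set Implicit Arguments. Unset Strict Implicit.

Lemma D_line (R : realType) m (f : 'rV[R]_m -> R) w v :
  'D_v f w = derive1 (fun t : R => f (t *: v + w)) 0.
Proof.
rewrite /derive /derive1 /=.
suff -> : (fun h : R => h^-1 *: ((f \o shift w) (h *: v) - f w)) =
  (fun h : R => h^-1 *: (f ((h + 0) *: v + w) - f (0 *: v + w))) by [].
by apply/funext => h /=; rewrite addr0 scale0r add0r.
Qed.

Lemma is_derive_aff (R : realType) (a c : R) :
  is_derive (0:R) 1 (fun t : R => t * a + c) a.
Proof.
have -> : (fun t : R => t * a + c) = (id * cst a) + cst c by [].
apply: is_derive_eq.
by rewrite scale0r add0r addr0 /= [_%:A]mulr1.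
Qed.

Lemma is_derive_lse (R : realType) N (a c : 'I_N -> R) :
  (0 < N)%N ->
  is_derive (0:R) 1 (fun t : R => ln (\sum_(y < N) expR (t * a y + c y)))
    ((\sum_(y < N) expR (c y) * a y) / \sum_(y < N) expR (c y)).
Proof.
move=> N0.
have pos : 0 < \sum_(y < N) expR (c y).
  rewrite (bigD1 (Ordinal N0)) //=.
  by apply: ltr_pwDl; [exact: expR_gt0 | apply: sumr_ge0 => *; exact: expR_ge0].
have -> : (fun t : R => ln (\sum_(y < N) expR (t * a y + c y))) =
  (@ln R) \o (\sum_(y < N) (expR \o (fun t : R => t * a y + c y))).
  by apply/funext => t /=; rewrite fct_sumE.
apply: is_derive_eq.
  apply: is_derive1_comp.
    rewrite fct_sumE /=.
    apply: is_derive1_ln.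
    under eq_bigr do rewrite mul0r add0r.
    exact: pos.
rewrite mulrC; congr (_ * _).
  by apply: eq_bigr => y _ /=; rewrite mul0r add0r scaler0 add0r addr0 [_%:A]mulr1.
by congr (_^-1); apply: eq_bigr => y _; rewrite mul0r add0r.
Qed.

Set Implicit Arguments. Unset Strict Implicit.

Section S6.
Variables (R : realType) (N m : nat) (P : 'M[R]_(m, N)).
Hypothesis N0 : (0 < N)%N.

Lemma cc_delta y i t (w : 'rV[R]_m) :
  cc P y (t *: delta_mx ord0 i + w) = t * ln (P i y) + cc P y w.
Proof.
rewrite /cc.
under eq_bigr do rewrite !mxE /= mulrDl.
rewrite big_split /=; congr (_ + _).
rewrite (bigD1 i) //= eqxx /= mulr1 big1 ?addr0 // => j ji.
case: eqP => [ji'|_]; last by rewrite mulr0 mul0r.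
by rewrite ji' eqxx in ji.
Qed.

Lemma DFF x i (w : 'rV[R]_m) :
  'D_(delta_mx ord0 i) (FF P x) w =
  ((\sum_(y < N) expR (cc P y w) * ln (P i y)) / SS P w - ln (P i x)) / ln 2.
Proof.
rewrite D_line /FF /SS.
under [X in derive1 X]funext => t do under eq_bigr do rewrite cc_delta.
under [X in derive1 X]funext => t do rewrite cc_delta.
have -> : (fun t : R => (ln (\sum_(y < N) expR (t * ln (P i y) + cc P y w)) -
   (t * ln (P i x) + cc P x w)) / ln 2) =
  ((fun t : R => ln (\sum_(y < N) expR (t * ln (P i y) + cc P y w))) -
   (fun t : R => t * ln (P i x) + cc P x w)) * cst (ln 2)^-1 by [].
rewrite derive1E; apply: derive_val.
have h1 := is_derive_lse (fun y => ln (P i y)) (fun y => cc P y w) N0.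
have h2 := is_derive_aff (ln (P i x)) (cc P x w).
apply: is_derive_eq.
by rewrite scaler0 add0r /= [_ *: _]mulrC.
Qed.
End S6.

Set Implicit Arguments. Unset Strict Implicit.

Section S7.
Variables (R : realType) (N m : nat) (P : 'M[R]_(m, N)).
Hypothesis Ppos : forall i x, 0 < P i x.
Hypothesis N0 : (0 < N)%N.

Lemma pmin_gt0 : 0 < pmin P.
Proof.
rewrite /pmin; elim/big_ind: _ => //; first by move=> a b a0 b0; rewrite lt_min a0 b0.
move=> i _; elim/big_ind: _ => //; first by move=> a b a0 b0; rewrite lt_min a0 b0.
Qed.

Lemma pmin_le i y : pmin P <= P i y.
Proof.
rewrite /pmin; apply: le_trans; first exact: (bigmin_le _ i).
exact: bigmin_le.
Qed.

Lemma pmax_ge i y : P i y <= pmax P.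
Proof.
rewrite /pmax; apply: le_trans; last exact: (le_bigmax _ _ i).
exact: le_bigmax.
Qed.

Lemma lnP_bound i y z : ln (P i y) - ln (P i z) <= ln (pmax P / pmin P).
Proof.
have h0 := pmin_gt0.
have h1 : 0 < pmax P := lt_le_trans (Ppos i y) (pmax_ge i y).
rewrite ln_div ?posrE //.
have : ln (P i y) <= ln (pmax P) by rewrite ler_ln ?posrE // pmax_ge.
have : ln (pmin P) <= ln (P i z) by rewrite ler_ln ?posrE // pmin_le.
lra.
Qed.

Definition qq (w : 'rV[R]_m) y := expR (cc P y w) / SS P w.

Lemma sum_qq w : \sum_(y < N) qq w y = 1.
Proof. by rewrite /qq -mulr_suml mulfV // gt_eqF // SS_gt0. Qed.

Lemma qq_ge0 w y : 0 <= qq w y.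
Proof. by rewrite /qq divr_ge0 // ?expR_ge0 // ltW // SS_gt0. Qed.

Lemma T_bound x i w :
  ((\sum_(y < N) expR (cc P y w) * ln (P i y)) / SS P w - ln (P i x)) ^+ 2
   <= ((1 - qq w x) * ln (pmax P / pmin P)) ^+ 2.
Proof.
set T := (_ - _).
set L := ln (pmax P / pmin P).
have TE : T = \sum_(y < N | y != x) qq w y * (ln (P i y) - ln (P i x)).
  have -> : T = \sum_(y < N) qq w y * (ln (P i y) - ln (P i x)).
    under [RHS]eq_bigr do rewrite mulrBr.
    rewrite sumrB -(mulr_suml _ _ _ (ln (P i x))) sum_qq mul1r /T; congr (_ - _).
    by rewrite mulr_suml; apply: eq_bigr => y _; rewrite /qq mulrAC.
  by rewrite (bigD1 x) //= subrr mulr0 add0r.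
have qxE : 1 - qq w x = \sum_(y < N | y != x) qq w y.
  by rewrite -(sum_qq w) (bigD1 x) //= addrAC subrr add0r.
have up : T <= (1 - qq w x) * L.
  rewrite TE qxE mulr_suml; apply: ler_sum => y _.
  by rewrite ler_wpM2l ?qq_ge0 // lnP_bound.
have lo : - ((1 - qq w x) * L) <= T.
  rewrite TE qxE mulr_suml -sumrN; apply: ler_sum => y _.
  rewrite -mulrN ler_wpM2l ?qq_ge0 //.
  have := lnP_bound i x y; rewrite /L; lra.
nra.
Qed.
End S7.


Lemma qq_le1 (R : realType) N m (P : 'M[R]_(m, N)) w x :
  (0 < N)%N -> qq P w x <= 1.
Proof.
move=> N0; rewrite -(sum_qq P N0 w) (bigD1 x) //= lerDl.
by apply: sumr_ge0 => y _; exact: qq_ge0 N0 w y.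
Qed.

Lemma qq_gt0 (R : realType) N m (P : 'M[R]_(m, N)) w x :
  (0 < N)%N -> 0 < qq P w x.
Proof. by move=> N0; rewrite /qq divr_gt0 ?expR_gt0 ?SS_gt0. Qed.

Lemma FF_q (R : realType) N m (P : 'M[R]_(m, N)) w x :
  (0 < N)%N -> FF P x w = - ln (qq P w x) / ln 2.
Proof.
move=> N0; rewrite /FF /qq ln_div ?posrE ?expR_gt0 ?SS_gt0 // expRK.
by rewrite opprB.
Qed.

Unset Implicit Arguments.

Theorem lemma1 (R : realType) (N m : nat) (hN : (1 < N)%N) (hm : (1 < m)%N)
  (W : set 'rV[R]_m) :
  W !=set0 -> compact W -> convex_set W ->
  forall (P : 'M[R]_(m, N)), prob_matrix_pos P ->
  forall x : 'I_N,
    let f := fun w : 'rV[R]_m => loss (geo x w P) in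
    convex_fun_on W f /\
    (forall w, W w -> differentiable f w) /\
    (forall a : R,
       a >= (m%:R / log2 (expR 1)) * (log2 (pmax P / pmin P)) ^+ 2 ->
       forall w, W w -> grad_norm2 f w <= a * f w).
Proof.
move=> _ _ _ P [Ppos _] x f.
have N0 : (0 < N)%N by apply: ltnW.
have fE : f = FF P x by apply/funext => w; rewrite /f (lossE Ppos).
rewrite fE; split; first by move=> u v _ _ t t01; exact: FF_conv N0 t01.
split; first by move=> w _; exact: FF_diff N0 x w.
move=> a ha w _.
set q := qq P w x.
set Lr := ln (pmax P / pmin P).
have l2 : 0 < ln (2:R) := ln2_gt0 R.
have q0 : 0 < q by exact: qq_gt0.
have q1 : q <= 1 by exact: qq_le1.
have step : grad_norm2 (FF P x) w <= m%:R * (((1 - q) * Lr) ^+ 2 / ln 2 ^+ 2).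
  rewrite /grad_norm2.
  apply: (@le_trans _ _ (\sum_(i < m) (((1 - q) * Lr) ^+ 2 / ln 2 ^+ 2))).
    apply: ler_sum => i _; rewrite (DFF P N0) expr_div_n ler_wpM2r //.
      by rewrite invr_ge0 exprn_ge0 // ltW.
    exact: T_bound Ppos N0 x i w.
  by rewrite sumr_const card_ord mulr_natl.
apply: (le_trans step).
have lq : ln q <= q - 1.
  have := @le_ln1Dx R (q - 1); rewrite (_ : 1 + (q - 1) = q); last by ring.
  by apply; lra.
have Fq := @FF_q R N m P w x N0; rewrite -/q in Fq.
have F0 : 0 <= FF P x w.
  rewrite Fq; apply: divr_ge0; [have := ln_le0 q1; lra | exact: ltW].
apply: le_trans (ler_wpM2r F0 ha).
rewrite Fq /log2 expRK div1r invrK.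
set l := ln (2:R).
have lne : l != 0 by rewrite gt_eqF.
have -> : m%:R * l * (Lr / l) ^+ 2 * (- ln q / l) = m%:R * (Lr ^+ 2 * (- ln q) / l ^+ 2).
  by field.
rewrite ler_wpM2l // ler_wpM2r; last first.
  by rewrite exprMn [X in _ <= X]mulrC ler_wpM2r ?sqr_ge0 //; nra.
all: try by [].
by rewrite invr_ge0 exprn_ge0 // ltW.
Qed.
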